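(* Let $G=(V,E)$ be a finite simple graph with at least one edge and no isolated vertices. The following are equivalent: (1) $G$ is uniformly dense; (2) $\operatorname{rank}(L(G))-\operatorname{rank}(L(G|A))\le \frac{|E|-|A|}{\rho(G)}$ for all nonempty $A\subseteq E$; (3) $\frac{n_0(L^1(G|A))}{|A|}\le\frac{n_0(L^1(G))}{|E|}$ for all nonempty $A\subseteq E$.
   Context: For $A\subseteq E$, $c(A)$ is the number of components of $(V,A)$, $\operatorname{rank}(A)=|V|-c(A)$, $\rho(A)=|A|/\operatorname{rank}(A)$, $\rho(G)=\rho(E)$; $G$ is uniformly dense if $\rho(A)\le\rho(G)$ for all nonempty $A$. $G|A$ is the graph obtained from $(V,A)$ by removing all isolated vertices. The normalized Laplacian $L(G)$ acts on functions $f:V\to\mathbb{R}$ by $Lf(v)=f(v)-\frac{1}{\deg v}\sum_{u:\{u,v\}\in E}f(u)$ (matrix $I-AD^{-1}$); $\operatorname{rank}$ of $L$ is the linear-algebraic rank. Fix an arbitrary orientation of each edge (an input and an output endpoint). The edge Laplacian $L^1(G)$ acts on $\gamma:E\to\mathbb{R}$ by, for $e$ with input $v$ and output $w$, $L^1\gamma(e)=\frac{\sum_{e_1:\,v\text{ input of }e_1}\gamma(e_1)-\sum_{e_2:\,v\text{ output of }e_2}\gamma(e_2)}{\deg v}-\frac{\sum_{e_1':\,w\text{ input of }e_1'}\gamma(e_1')-\sum_{e_2':\,w\text{ output of }e_2'}\gamma(e_2')}{\deg w}$. $n_0(\cdot)$ denotes the multiplicity of $0$ as an eigenvalue. *)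

(* Defs.v *)
From HB Require Import structures.
From mathcomp Require Import all_boot all_order all_algebra.
Set Implicit Arguments. Unset Strict Implicit. Unset Printing Implicit Defensive.
Import Order.TTheory GRing.Theory Num.Theory.
Local Open Scope ring_scope.

(* A finite simple graph on vertex type V, together with a fixed (arbitrary)
   orientation, is represented by a set E of ordered pairs (input, output):
   no loops and no pair stored in both directions.  The underlying undirected
   edge of (v,w) is {v,w}.  Subsets A of E inherit the orientation. *)
Section Graph.
Variable V : finType.

Definition oriented_simple (E : {set V * V}) : Prop :=
  forall x y, (x, y) \in E -> x != y /\ (y, x) \notin E.

Definition adj (A : {set V * V}) : rel V :=
  fun x y => ((x, y) \in A) || ((y, x) \in A).

Definition deg (A : {set V * V}) (v : V) : nat :=
  #|[set a in A | (a.1 == v) || (a.2 == v)]|.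

(* vertex set of G|A: non-isolated vertices of (V, A) *)
Definition vsupp (A : {set V * V}) : {set V} := [set v | 0 < deg A v]%N.

Definition ncomp (A : {set V * V}) : nat := n_comp (adj A) [pred x : V | true].

Definition grank (A : {set V * V}) : nat := (#|V| - ncomp A)%N.

Definition rho (R : realFieldType) (A : {set V * V}) : R :=
  #|A|%:R / (grank A)%:R.

Definition uniformly_dense (R : realFieldType) (E : {set V * V}) : Prop :=
  forall A : {set V * V}, A \subset E -> A != set0 -> rho R A <= rho R E.

(* Normalized Laplacian of the graph with vertex set S and edge set A,
   as the matrix of f |-> (v |-> f v - (1/deg v) sum_{u ~ v} f u),
   vertices of S indexed via enum_val. *)
Definition nlap (R : realFieldType) (S : {set V}) (A : {set V * V})
  : 'M[R]_#|S| :=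
  \matrix_(i, j)
    ((i == j)%:R - (adj A (enum_val i) (enum_val j))%:R
                    / (deg A (enum_val i))%:R).

Definition LapG (R : realFieldType) (E : {set V * V}) := nlap R [set: V] E.
Definition LapR (R : realFieldType) (A : {set V * V}) := nlap R (vsupp A) A.

Definition inc (R : realFieldType) (x : V) (a : V * V) : R :=
  (x == a.1)%:R - (x == a.2)%:R.

(* Edge Laplacian L^1(G|A) (for A = E this is L^1(G), as G has no isolated
   vertices): for e = (v,w) (input v, output w),
   L1 g e = (sum_{e1} inc v e1 g e1)/deg v - (sum_{e1} inc w e1 g e1)/deg w. *)
Definition edgeLap (R : realFieldType) (A : {set V * V}) : 'M[R]_#|A| :=
  \matrix_(i, j)
    (inc R (enum_val i).1 (enum_val j) / (deg A (enum_val i).1)%:R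
     - inc R (enum_val i).2 (enum_val j) / (deg A (enum_val i).2)%:R).

Definition n0 (R : realFieldType) (n : nat) (M : 'M[R]_n) : nat :=
  mup 0 (char_poly M).

End Graph.

(* Main.v *)
Require Import Defs.
From HB Require Import structures.
From mathcomp Require Import all_boot all_order all_algebra.
From mathcomp Require Import zify ring.
Set Implicit Arguments. Unset Strict Implicit. Unset Printing Implicit Defensive.
Import Order.TTheory GRing.Theory Num.Theory.
Local Open Scope ring_scope.

Section Sylv.
Variable F : fieldType.

Lemma sylvester n r (C : 'M[F]_(n, r)) (D : 'M[F]_(r, n)) :
  'X^r * char_poly (C *m D) = 'X^n * char_poly (D *m C).
Proof.
set Cp := map_mx polyC C; set Dp := map_mx polyC D.
have eCD : char_poly (C *m D) = \det ('X%:M - Cp *m Dp).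
  by rewrite /char_poly /char_poly_mx map_mxM.
have eDC : char_poly (D *m C) = \det ('X%:M - Dp *m Cp).
  by rewrite /char_poly /char_poly_mx map_mxM.
set Mb := block_mx ('X%:M : 'M_n) Cp Dp (1%:M : 'M_r).
have h1 : 'X^r * \det Mb = char_poly (C *m D) * 'X^r.
  have := det_mulmx (block_mx 1%:M (- Cp) 0 ('X%:M)) Mb.
  rewrite mulmx_block det_ublock det1 mul1r (@det_scalar _ r) => <-.
  rewrite (@mul1mx _ n n) (@mul1mx _ n r) (@mul0mx _ r n n) (@mul0mx _ r n r).
  rewrite (@mulmx1 _ r r) (@mulmx1 _ n r) !add0r mulNmx addrN.
  by rewrite det_lblock eCD (@det_scalar _ r).
have h2 : 'X^r * \det Mb = 'X^n * char_poly (D *m C).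
  have := det_mulmx (block_mx 1%:M 0 (- Dp) ('X%:M)) Mb.
  rewrite mulmx_block det_lblock det1 mul1r (@det_scalar _ r) => <-.
  rewrite (@mul1mx _ n n) (@mul1mx _ n r) (@mul0mx _ n r n) (@mul0mx _ n r r).
  rewrite (@mulmx1 _ r r) !addr0 !mulNmx mul_mx_scalar mul_scalar_mx addNr.
  by rewrite det_ublock eDC (@det_scalar _ n) addrC.
have hX : 'X^r != 0 :> {poly F} by rewrite monic_neq0 // monicXn.
have : 'X^r * \det Mb = 'X^r * char_poly (C *m D) by rewrite h1 mulrC.
by move/(mulfI hX) => <-.
Qed.

Lemma mupX0 k (p : {poly F}) : p != 0 -> mup 0 ('X^k * p) = (k + mup 0 p)%N.
Proof.
move=> p0; have hX : ('X^k : {poly F}) != 0 by rewrite monic_neq0 // monicXn.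
rewrite mupM //.
by have := @mup_XsubCX F k 0 0; rewrite subr0 eqxx => ->.
Qed.

Lemma mup0_char n (M : 'M[F]_n) :
  \rank (M *m M) = \rank M -> mup 0 (char_poly M) = (n - \rank M)%N.
Proof.
move=> hMM.
have eM := mulmx_base M.
set C := col_base M in eM; set D := row_base M in eM.
have hDC : \rank (D *m C) = \rank M.
  apply/eqP; rewrite eqn_leq rank_leq_row /=.
  have eMM : M *m M = C *m (D *m C) *m D.
    by rewrite mulmxA -mulmxA eM.

  rewrite -{1}hMM eMM.
  apply: leq_trans (mxrankM_maxl _ _) _.
  exact: mxrankM_maxr.
have uDC : D *m C \in unitmx by rewrite -row_free_unit /row_free hDC.
have nr : ~~ root (char_poly (D *m C)) 0.
  rewrite /root horner_coef0 char_poly_det mulf_eq0 signr_eq0 /=.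
  by rewrite -unitfE -unitmxE.
have := sylvester C D; rewrite eM => /(congr1 (mup 0)).
rewrite !mupX0 ?monic_neq0 ?char_poly_monic // (mupNroot nr) addn0 => h.
by rewrite -[X in _ = (X - _)%N]h addKn.
Qed.
End Sylv.
Lemma rank_BWBt (R : realFieldType) m n (B : 'M[R]_(m,n)) (w : 'rV[R]_n) :
  (forall j, 0 < w 0 j) -> \rank (B *m diag_mx w *m B^T) = \rank B.
Proof.
move=> wpos.
have key : forall u : 'rV_m, u *m (B *m diag_mx w *m B^T) = 0 -> u *m B = 0.
  move=> u hu; set v := u *m B.
  have : (v *m diag_mx w *m v^T) 0 0 = 0.
    by rewrite /v trmx_mul !mulmxA; rewrite !mulmxA in hu; rewrite hu mul0mx mxE.
  clearbody v => hv.
  have hs : \sum_j (w 0 j * (v 0 j * v 0 j)) = 0.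
    rewrite -[RHS]hv mul_mx_diag mxE; apply: eq_bigr => j _; rewrite !mxE.
    by rewrite -mulrA mulrCA.
  have h := psumr_eq0P (fun i _ => mulr_ge0 (ltW (wpos i)) (sqr_ge0 (v 0 i))) hs.
  apply/rowP => j; rewrite mxE.
  have /eqP := h j isT.
  rewrite mulf_eq0 (gt_eqF (wpos j)) /= mulf_eq0.
  by rewrite orbb => /eqP.
apply/eqP; rewrite eqn_leq; apply/andP; split.
  by apply: leq_trans (mxrankM_maxl _ _) _; apply: mxrankM_maxl.
have sub : (kermx (B *m diag_mx w *m B^T) <= kermx B)%MS.
  apply/row_subP => i; rewrite sub_kermx; apply/eqP/key.
  by rewrite -row_mul mulmx_ker row0.
have := mxrankS sub; rewrite !mxrank_ker.
have := rank_leq_row B; have := rank_leq_row (B *m diag_mx w *m B^T).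
lia.
Qed.
Section G.
Variables (R : realFieldType) (V : finType).

Lemma inc_prod x y (a : V * V) : a.1 != a.2 ->
  inc R x a * inc R y a =
  if x == y then ((a.1 == x) || (a.2 == x))%:R
  else - ((a == (x, y))%:R + (a == (y, x))%:R).
Proof.
case: a => a1 a2 /= ne; rewrite /inc /= !xpair_eqE.
have h12 : forall z, ~~ ((z == a1) && (z == a2)).
  by move=> z; apply/negP => /andP[/eqP e1 /eqP e2]; move: ne; rewrite -e1 -e2 eqxx.
rewrite !(eq_sym a1) !(eq_sym a2).
case: (x =P y) => [<-|nxy].
  move: (h12 x); case: (x == a1); case: (x == a2) => //= _;
  rewrite ?mulr1n ?mulr0n; ring.
have hx1 : ~~ ((x == a1) && (y == a1)).
  by apply/negP => /andP[/eqP e1 /eqP e2]; apply: nxy; rewrite e1 e2.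
have hx2 : ~~ ((x == a2) && (y == a2)).
  by apply/negP => /andP[/eqP e1 /eqP e2]; apply: nxy; rewrite e1 e2.
move: (h12 x) (h12 y) hx1 hx2.
case: (x == a1); case: (x == a2); case: (y == a1); case: (y == a2) => //= _ _ _ _;
  rewrite ?mulr1n ?mulr0n; ring.
Qed.

Lemma sum_enum (T : finType) (S : {set T}) (F : T -> R) :
  \sum_(k < #|S|) F (enum_val k) = \sum_(x in S) F x.
Proof. by rewrite (big_enum_val (A := mem S)). Qed.

Lemma sum_pick (S : {pred V}) (F : V -> R) p : p \in S ->
  \sum_(x in S) (x == p)%:R * F x = F p.
Proof.
move=> pS; rewrite (bigD1 p) //= eqxx mul1r big1 ?addr0 //.
by move=> x /andP[_ /negPf ->]; rewrite mul0r.
Qed.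

Lemma sum_indic (A : {set V * V}) p :
  \sum_(a in A) ((a == p)%:R : R) = (p \in A)%:R.
Proof.
case pA: (p \in A).
  by rewrite (bigD1 p) //= eqxx big1 ?addr0 // => a /andP[_ /negPf ->].
rewrite big1 // => a aA.
have /negPf -> : a != p by apply: contraTneq aA => ->; rewrite pA.
by [].
Qed.

Lemma sum_inc2 (A : {set V * V}) x y : oriented_simple A ->
  \sum_(a in A) inc R x a * inc R y a =
  if x == y then (deg A x)%:R else - (adj A x y)%:R.
Proof.
move=> os.
have ne : forall a, a \in A -> a.1 != a.2 by case=> a1 a2 /os [].
rewrite (eq_bigr _ (fun a aA => inc_prod x y (ne a aA))).
case: (eqVneq x y) => [e|nxy].
  subst y; rewrite -natr_sum /deg -sum1_card; congr (_%:R).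
  rewrite big_mkcond /= [RHS]big_mkcond /=; apply: eq_bigr => a _.
  by rewrite !inE; case: (a \in A); case: (_ || _).
rewrite sumrN big_split /= !sum_indic /adj.
have := os x y; case: ((x, y) \in A) => [/(_ isT) [_ /negPf ->]|_] /=.
  by rewrite addr0 mulr1n.
by rewrite add0r.
Qed.


Definition Bm (S : {set V}) (A : {set V * V}) : 'M[R]_(#|S|, #|A|) :=
  \matrix_(i, j) inc R (enum_val i) (enum_val j).
Definition dv (S : {set V}) (A : {set V * V}) : 'rV[R]_#|S| :=
  \row_i ((deg A (enum_val i))%:R)^-1.

Lemma endpt1 (A : {set V * V}) a : a \in A -> a.1 \in vsupp A.
Proof. by move=> aA; rewrite inE; apply/card_gt0P; exists a; rewrite inE aA eqxx. Qed.
Lemma endpt2 (A : {set V * V}) a : a \in A -> a.2 \in vsupp A.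
Proof. by move=> aA; rewrite inE; apply/card_gt0P; exists a; rewrite inE aA eqxx orbT. Qed.

Lemma nlap_fact (A : {set V * V}) : oriented_simple A ->
  nlap R (vsupp A) A =
  diag_mx (dv (vsupp A) A) *m (Bm (vsupp A) A *m (Bm (vsupp A) A)^T).
Proof.
move=> os; apply/matrixP => i j; rewrite mul_diag_mx !mxE.
under eq_bigr do rewrite !mxE.
rewrite (@sum_enum _ A (fun a => inc R (enum_val i) a * inc R (enum_val j) a)).
rewrite sum_inc2 // (inj_eq enum_val_inj).
have dpos : (deg A (enum_val i))%:R != 0 :> R.
  by rewrite pnatr_eq0 -lt0n; have := enum_valP i; rewrite inE.
case: (eqVneq i j) => [<-|nij] /=.
  have -> : adj A (enum_val i) (enum_val i) = false.
    rewrite /adj orbb; apply/negP => /os [].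
    by rewrite eqxx.
  by rewrite mul0r subr0 mulVf.
by rewrite mulrN mulrC sub0r.
Qed.


Lemma sum_inc (S : {pred V}) (G : V -> R) a : a.1 \in S -> a.2 \in S ->
  \sum_(x in S) inc R x a * G x = G a.1 - G a.2.
Proof.
move=> h1 h2; rewrite /inc.
under eq_bigr do rewrite mulrBl.
by rewrite sumrB !sum_pick.
Qed.

Lemma edgeLap_fact (A : {set V * V}) :
  edgeLap R A =
  (Bm (vsupp A) A)^T *m diag_mx (dv (vsupp A) A) *m Bm (vsupp A) A.
Proof.
apply/matrixP => i j; rewrite mul_mx_diag !mxE.
under eq_bigr do rewrite !mxE -mulrA.
rewrite (@sum_enum _ (vsupp A) (fun x => inc R x (enum_val i) *
   (((deg A x)%:R)^-1 * inc R x (enum_val j)))).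
have eA := enum_valP i.
rewrite sum_inc ?endpt1 ?endpt2 //.
by rewrite ![_^-1 * _]mulrC.
Qed.


Lemma sum_enumT (F : V -> R) :
  \sum_(k < #|V|) F (enum_val k) = \sum_(x in [set: V]) F x.
Proof.
rewrite -(big_enum_val (A := V)) /=; apply: eq_bigl => x; by rewrite !inE.
Qed.

Definition BV (A : {set V * V}) : 'M[R]_(#|V|, #|A|) :=
  \matrix_(i < #|V|, j < #|A|) inc R (enum_val i) (enum_val j).


Lemma rank_BV (A : {set V * V}) : \rank (BV A) = (#|V| - ncomp A)%N.
Proof.
set e := adj A.
have se : connect_sym e.
  by apply: sym_connect_sym => x y; rewrite /e /adj orbC.
set Rt := [set x | fingraph.root e x == x].
have cRt : #|Rt| = ncomp A.
  by rewrite /ncomp; apply: eq_card => x; rewrite !inE andbT.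
set g := fun r : 'I_#|Rt| => enum_val r.
set Q : 'M[R]_(#|Rt|, #|V|) := \matrix_(r, k) (fingraph.root e (enum_val k) == g r)%:R.
set Pm : 'M[R]_(#|V|, #|Rt|) := \matrix_(k, r) (enum_val k == g r)%:R.
have QP : Q *m Pm = 1%:M.
  apply/matrixP => r r'; rewrite !mxE.
  under eq_bigr do rewrite !mxE mulrC.
  rewrite (sum_enumT (fun x => (x == g r')%:R * (fingraph.root e x == g r)%:R)).
  rewrite sum_pick ?in_setT //.
  have := enum_valP r'; rewrite inE => /eqP ->.
  by rewrite /g (inj_eq enum_val_inj) eq_sym.
have rQ : \rank Q = #|Rt|.
  apply/eqP; rewrite eqn_leq rank_leq_row /=.
  rewrite -{1}(mxrank1 R #|Rt|) -QP; exact: mxrankM_maxl.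
have QB : Q *m BV A = 0.
  apply/matrixP => r j; rewrite !mxE.
  under eq_bigr do rewrite !mxE mulrC.
  rewrite (sum_enumT (fun x => inc R x (enum_val j) * (fingraph.root e x == g r)%:R)).
  rewrite sum_inc ?in_setT //.
  have : e (enum_val j).1 (enum_val j).2.
    by rewrite /e /adj -surjective_pairing enum_valP.
  by move/connect1/(fingraph.rootP se) => ->; rewrite subrr.
have kerQ : (kermx (BV A) <= Q)%MS.
  apply/row_subP => i; set u := row i (kermx (BV A)).
  have hu : u *m BV A = 0 by rewrite /u -row_mul mulmx_ker row0.
  clearbody u.
  set uf := fun x : V => u 0 (enum_rank x).
  have huf : forall a, a \in A -> uf a.1 = uf a.2.
    move=> a aA; have := congr1 (fun M : 'M[R]_(1, #|A|) => M 0 (enum_rank_in aA a)) hu.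
    rewrite !mxE.
    rewrite (eq_bigr (fun k => inc R (enum_val k) a * uf (enum_val k))); last first.
      by move=> k _; rewrite !mxE enum_rankK_in // /uf enum_valK mulrC.
    rewrite (sum_enumT (fun x => inc R x a * uf x)) sum_inc ?in_setT //.
    by move/eqP; rewrite subr_eq0 => /eqP.
  have hconn : forall x, uf x = uf (fingraph.root e x).
    move=> x.
    have cl : closed e [pred z | uf z == uf x].
      move=> y z; rewrite /e /adj !inE => /orP [] /huf /= ->; by [].
    have := closed_connect cl (fingraph.connect_root e x).
    by rewrite !inE eqxx => /esym /eqP.
  apply/submxP; exists (\row_r uf (g r)); apply/rowP => k; rewrite !mxE.
  rewrite (eq_bigr (fun r => (g r == fingraph.root e (enum_val k))%:R * uf (g r))); last first.
    by move=> r _; rewrite !mxE eq_sym mulrC.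
  rewrite (@sum_enum _ Rt (fun y => (y == fingraph.root e (enum_val k))%:R * uf y)).
  rewrite sum_pick; last by rewrite inE fingraph.root_root.
  by rewrite -hconn /uf enum_valK.
have r1 := mxrankS kerQ.
have r2 : (Q <= kermx (BV A))%MS by rewrite sub_kermx QB.
have r3 := mxrankS r2.
move: r1 r3; rewrite mxrank_ker rQ cRt.
have := rank_leq_row (BV A).
lia.
Qed.


Lemma rank_Bm (A : {set V * V}) : \rank (Bm (vsupp A) A) = grank A.
Proof.
rewrite /grank -rank_BV.
set S := vsupp A.
set P1 : 'M[R]_(#|S|, #|V|) := \matrix_(i, k) (enum_val k == enum_val i)%:R.
set P2 : 'M[R]_(#|V|, #|S|) := \matrix_(k, i) (enum_val i == enum_val k)%:R.
have e1 : P1 *m BV A = Bm S A.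
  apply/matrixP => i j; rewrite !mxE.
  under eq_bigr do rewrite !mxE.
  rewrite (sum_enumT (fun x => (x == enum_val i)%:R * inc R x (enum_val j))).
  by rewrite sum_pick ?in_setT.
have e2 : P2 *m Bm S A = BV A.
  apply/matrixP => k j; rewrite !mxE.
  under eq_bigr do rewrite !mxE.
  rewrite (@sum_enum _ S (fun x => (x == enum_val k)%:R * inc R x (enum_val j))).
  case: (boolP (enum_val k \in S)) => h; first by rewrite sum_pick.
  rewrite big1; last first.
    move=> x xS; have /negPf -> : x != enum_val k.
      by apply: contraNneq h => <-.
    by rewrite mul0r.
  have jA := enum_valP j.
  rewrite /inc.
  have /negPf -> : enum_val k != (enum_val j).1.
    by apply: contraNneq h => ->; exact: endpt1.
  have /negPf -> : enum_val k != (enum_val j).2.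
    by apply: contraNneq h => ->; exact: endpt2.
  by rewrite subrr.
apply/eqP; rewrite eqn_leq; apply/andP; split.
  by rewrite -e1; exact: mxrankM_maxr.
by rewrite -{1}e2; exact: mxrankM_maxr.
Qed.

End G.

Section Main.
Variables (R : realFieldType) (V : finType).

Lemma os_sub (E A : {set V * V}) : oriented_simple E -> A \subset E ->
  oriented_simple A.
Proof.
move=> os sub x y xyA; have [-> h] := os x y (subsetP sub _ xyA).
by split=> //; apply: contra h; apply: (subsetP sub).
Qed.

Lemma dv_pos (A : {set V * V}) j : 0 < dv R (vsupp A) A 0 j.
Proof.
rewrite mxE invr_gt0 ltr0n; have := enum_valP j; by rewrite inE.
Qed.

Lemma rank_B1 m n (B : 'M[R]_(m, n)) : \rank (B *m B^T) = \rank B.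
Proof.
have := @rank_BWBt R _ _ B (const_mx 1) (fun j => ltac:(by rewrite mxE ltr01)).
by rewrite diag_const_mx mulmx1.
Qed.

Lemma rank_LapR (A : {set V * V}) : oriented_simple A ->
  \rank (LapR R A) = grank A.
Proof.
move=> os; rewrite /LapR nlap_fact //.
set D := diag_mx _; set X := Bm R (vsupp A) A *m (Bm R (vsupp A) A)^T.
have uD : D \in unitmx.
  rewrite unitmxE det_diag unitfE; apply/prodf_neq0 => i _.
  by rewrite gt_eqF // dv_pos.
apply/eqP; rewrite eqn_leq; apply/andP; split.
  by apply: leq_trans (mxrankM_maxr _ _) _; rewrite /X rank_B1 rank_Bm.
rewrite -(rank_Bm R) -rank_B1 -/X -{1}(mulKmx uD X).
exact: mxrankM_maxr.
Qed.

Lemma rank_edgeLap (A : {set V * V}) : \rank (edgeLap R A) = grank A.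
Proof.
rewrite edgeLap_fact -{2}(trmxK (Bm R (vsupp A) A)).
by rewrite rank_BWBt ?mxrank_tr ?rank_Bm // => j; exact: dv_pos.
Qed.

Lemma n0_edgeLap (A : {set V * V}) : n0 (edgeLap R A) = (#|A| - grank A)%N.
Proof.
rewrite /n0 mup0_char; first by rewrite rank_edgeLap.
have sym : (edgeLap R A)^T = edgeLap R A.
  by rewrite edgeLap_fact !trmx_mul trmxK tr_diag_mx mulmxA.
by rewrite -{2}sym rank_B1.
Qed.

Lemma grank_gt0 (A : {set V * V}) : oriented_simple A -> A != set0 ->
  (0 < grank A)%N.
Proof.
move=> os /set0Pn [a aA].
rewrite -(rank_Bm R) lt0n mxrank_eq0; apply/eqP => h.
have a1 := endpt1 aA.
have := congr1 (fun M : 'M[R]_(#|vsupp A|, #|A|) => M (enum_rank_in a1 a.1) (enum_rank_in aA a)) h.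
rewrite !mxE !enum_rankK_in // /inc eqxx.
have aA' : (a.1, a.2) \in A by rewrite -surjective_pairing.
have [/negPf -> _] := os _ _ aA'.
by rewrite subr0 => /eqP; rewrite oner_eq0.
Qed.

Lemma grank_le (A : {set V * V}) : (grank A <= #|A|)%N.
Proof. by rewrite -(rank_Bm R); exact: rank_leq_col. Qed.

Lemma key1 (a g e h : R) : 0 < g -> 0 < h ->
  (a / g <= e / h) = (a * h <= g * e).
Proof.
move=> g0 h0; rewrite ler_pdivrMr // mulrAC ler_pdivlMr //.
by rewrite [e * g]mulrC.
Qed.

Lemma key2 (a g e h : R) : 0 < e -> 0 < h ->
  (h - g <= (e - a) / (e / h)) = (a * h <= g * e).
Proof.
move=> e0 h0; rewrite invf_div mulrA ler_pdivlMr // -subr_ge0.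
rewrite [X in 0 <= X](_ : _ = g * e - a * h); first by rewrite subr_ge0.
by ring.
Qed.

Lemma key3 (a g e h : R) : 0 < a -> 0 < e ->
  ((a - g) / a <= (e - h) / e) = (a * h <= g * e).
Proof.
move=> a0 e0; rewrite ler_pdivrMr // mulrAC ler_pdivlMr // -subr_ge0.
rewrite [X in 0 <= X](_ : _ = g * e - a * h); first by rewrite subr_ge0.
by ring.
Qed.

End Main.

Theorem theorem3p15 (R : realFieldType) (V : finType) (E : {set V * V}) :
  oriented_simple E ->
  E != set0 ->
  (forall v : V, (0 < deg E v)%N) ->
  [<-> uniformly_dense R E;
       forall A : {set V * V}, A \subset E -> A != set0 ->
         (\rank (LapG R E))%:R - (\rank (LapR R A))%:R
           <= (#|E|%:R - #|A|%:R) / rho R E;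
       forall A : {set V * V}, A \subset E -> A != set0 ->
         (n0 (edgeLap R A))%:R / #|A|%:R
           <= (n0 (edgeLap R E))%:R / #|E|%:R :> R].
Proof.
move=> os En0 hdeg.
have hS : vsupp E = [set: V] by apply/setP => x; rewrite !inE hdeg.
have rG : \rank (LapG R E) = grank E.
  by rewrite /LapG -hS rank_LapR.
have gE0 : (0 < grank E)%N := grank_gt0 R os En0.
have cE0 : (0 < #|E|)%N by rewrite card_gt0.
have P : forall A : {set V * V}, A \subset E -> A != set0 ->
  [/\ (rho R A <= rho R E) = (#|A| * grank E <= grank A * #|E|)%N,
      ((\rank (LapG R E))%:R - (\rank (LapR R A))%:R
           <= (#|E|%:R - #|A|%:R) / rho R E) = (#|A| * grank E <= grank A * #|E|)%N
    & ((n0 (edgeLap R A))%:R / #|A|%:R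
           <= (n0 (edgeLap R E))%:R / #|E|%:R :> R) = (#|A| * grank E <= grank A * #|E|)%N].
  move=> A sub An0.
  have osA := os_sub os sub.
  have gA0 : (0 < grank A)%N := grank_gt0 R osA An0.
  have cA0 : (0 < #|A|)%N by rewrite card_gt0.
  rewrite -(ler_nat R) !natrM.
  split.
  - by rewrite /rho key1 ?ltr0n.
  - by rewrite rG rank_LapR // /rho key2 ?ltr0n.
  - by rewrite !n0_edgeLap (natrB _ (grank_le R A)) (natrB _ (grank_le R E)) key3 ?ltr0n.
tfae.
- move=> H A sub An0; have [h1 h2 h3] := P A sub An0; rewrite h2 -h1; exact: H.
- move=> H A sub An0; have [h1 h2 h3] := P A sub An0; rewrite h3 -h2; exact: H.
- move=> H A sub An0; have [h1 h2 h3] := P A sub An0; rewrite h1 -h3; exact: H.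
Qed.
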